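(* For every integer $n\ge 2$, $$\operatorname{op}_{[2,\underbrace{1,\dots,1}_{n-2}]}(123) = \frac{3(n-1)\binom{2n-2}{n-1}}{n(n+1)}.$$
   Context: An ordered set partition of $[N]$ into $k$ blocks is a sequence $B_1/B_2/\cdots/B_k$ of nonempty, pairwise disjoint subsets of $[N]$ whose union is $[N]$; the order of the blocks matters, but not the order of elements within a block. For a permutation $\rho=\rho_1\cdots\rho_m\in\mathcal{S}_m$, an ordered partition $B_1/\cdots/B_k$ contains $\rho$ if there are block indices $i_1<i_2<\cdots<i_m$ and elements $b_j\in B_{i_j}$ such that $b_1\cdots b_m$ is order-isomorphic to $\rho$; otherwise it avoids $\rho$. For positive integers $b_1,\dots,b_k$, $\operatorname{op}_{[b_1,\dots,b_k]}(\rho)$ is the number of $\rho$-avoiding ordered partitions $B_1/\cdots/B_k$ of $[b_1+\cdots+b_k]$ with $|B_i|=b_i$ for all $i$. Thus $\operatorname{op}_{[2,1,\dots,1]}(123)$ (with $n-2$ ones) counts $123$-avoiding ordered partitions of $[n]$ whose first block has size $2$ and all other $n-2$ blocks have size $1$. *)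

(* Defs.v *)
From mathcomp Require Import all_boot all_order all_algebra all_fingroup.
Set Implicit Arguments. Unset Strict Implicit. Unset Printing Implicit Defensive.

(* Elements of [N] are represented 0-based by 'I_N (order preserved);
   blocks B_1/.../B_k are indexed by 'I_k. *)

Definition ordered_partition (N k : nat) (B : {ffun 'I_k -> {set 'I_N}}) : bool :=
  [forall i, B i != set0] &&
  [forall i, forall j, (i != j) ==> [disjoint B i & B j]] &&
  (\bigcup_(i < k) B i == [set: 'I_N]).

Definition contains_pat (N k m : nat) (rho : 'S_m) (B : {ffun 'I_k -> {set 'I_N}}) : bool :=
  [exists idx : {ffun 'I_m -> 'I_k}, exists el : {ffun 'I_m -> 'I_N},
     [forall j : 'I_m, forall j' : 'I_m, (j < j')%N ==> (idx j < idx j')%N] &&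
     [forall j : 'I_m, el j \in B (idx j)] &&
     [forall j : 'I_m, forall j' : 'I_m, ((el j < el j')%N == (rho j < rho j')%N)]].

Definition op (b : seq nat) (m : nat) (rho : 'S_m) : nat :=
  #|[set B : {ffun 'I_(size b) -> {set 'I_(sumn b)}} |
      ordered_partition B &&
      [forall i : 'I_(size b), #|B i| == nth 0 b i] &&
      ~~ contains_pat rho B]|.

Definition p123 : 'S_3 := 1%g.

(* Main.v *)
Require Import Defs.
From mathcomp Require Import all_boot all_order all_algebra all_fingroup.
From mathcomp Require Import ring lra zify.
Set Implicit Arguments. Unset Strict Implicit. Unset Printing Implicit Defensive.

Fixpoint hh (L p : nat) : nat :=
  match L with
  | 0 => 1
  | L'.+1 => \sum_(i < p) hh L' i + (if p < L'.+1 then hh L' p else 0)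
  end.

Lemma hh0 L : hh L 0 = 1.
Proof. by elim: L => //= L IH; rewrite big_ord0 IH. Qed.

Lemma hhS L p : (p <= L)%N -> hh L.+1 p.+1 = (hh L.+1 p + (if p < L then hh L p.+1 else 0))%N.
Proof.
move=> pL; by rewrite /= big_ord_recr /= ltnS ltnS pL.
Qed.



Fixpoint run (m t : nat) (w : seq nat) : bool :=
  match w with
  | [::] => true
  | x :: w' => (x < t) && run (minn m x) (if m < x then minn t x.+1 else t) w'
  end.

Fixpoint has12a (m : nat) (w : seq nat) : bool :=
  match w with
  | [::] => false
  | y :: w' => ((m < y) && has (fun z => y < z) w') || has12a m w'
  end.

Fixpoint has123 (w : seq nat) : bool :=
  match w with
  | [::] => false
  | x :: w' => has12a x w' || has123 w'
  end.

Lemma has12a_min a b w : has12a (minn a b) w = has12a a w || has12a b w.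
Proof.
elim: w => //= y w ->; rewrite gtn_min.
by case: (a < y); case: (b < y); case: (has _ w); case: (has12a a w); case: (has12a b w).
Qed.

Lemma run_inv w : forall m t,
  run m t w = ~~ has123 w && all (fun z => z < t) w && ~~ has12a m w.
Proof.
elim: w => //= x w IH m t.
rewrite IH has12a_min.
case mx: (m < x).
  rewrite (eq_all (a2 := predI (fun z => z < t) (fun z => ~~ (x < z)))); last first.
    by move=> z /=; rewrite leq_min ltnS (leqNgt z x).
  rewrite all_predI all_predC /=.
  by case: (x < t); case: (has _ w); case: (has123 w); case: (all _ w);
     case: (has12a m w); case: (has12a x w).
by case: (x < t); case: (has _ w); case: (has123 w); case: (all _ w);
     case: (has12a m w); case: (has12a x w).
Qed.

Lemma has12a_big N w : all (fun z => z < N) w -> has12a N w = false.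
Proof.
elim: w => //= y w IH /andP [yN aw]; rewrite IH // orbF.
by rewrite ltnNge ltnW.
Qed.

Lemma run_N N w : all (fun z => z < N) w -> run N N w = ~~ has123 w.
Proof. by move=> aw; rewrite run_inv aw (has12a_big aw) andbT andbT. Qed.

Lemma has12aP x s : reflect (exists j k, [/\ j < k, k < size s, x < nth 0 s j & nth 0 s j < nth 0 s k])
  (has12a x s).
Proof.
apply: (iffP idP).
  elim: s => //= y s IH /orP [/andP [xy /(has_nthP 0) [k ks yk]]|/IH [j [k [jk ks xj jk']]]].
    by exists 0, k.+1.
  by exists j.+1, k.+1.
elim: s => [|y s IH] [j [k [jk ks xj jk']]] /=; first by [].
case: j jk xj jk' => [|j] jk xj jk'; case: k jk ks jk' => [|k] //= jk ks jk'.
  by rewrite xj /=; apply/orP; left; apply/(has_nthP 0); exists k.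
by apply/orP; right; apply: IH; exists j, k.
Qed.

Lemma has123P s : reflect (exists i j k, [/\ i < j, j < k, k < size s &
   nth 0 s i < nth 0 s j < nth 0 s k]) (has123 s).
Proof.
apply: (iffP idP).
  elim: s => //= x s IH /orP [/has12aP [j [k [jk ks xj jk']]]|/IH [i [j [k [ij jk ks /andP [a b]]]]]].
    by exists 0, j.+1, k.+1; rewrite xj jk'.
  by exists i.+1, j.+1, k.+1; rewrite a b.
elim: s => [|x s IH] [i [j [k [ij jk ks /andP [a b]]]]] /=; first by [].
case: i ij a => [|i] ij a; case: j ij jk a b => [|j] //= ij jk a b; case: k jk ks b => [|k] //= jk ks b.
  by apply/orP; left; apply/has12aP; exists j, k.
by apply/orP; right; apply: IH; exists i, j, k; rewrite a b.
Qed.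


Lemma set_max N (S : {set 'I_N}) y : y \in S ->
  exists2 M, M \in S & forall x, x \in S -> (x <= M)%N.
Proof.
move=> yS; case: (@arg_maxnP _ y (fun x => x \in S) val yS) => M MS Mmax.
by exists M.
Qed.

Lemma rank_sum N (F : nat -> nat) n : forall (S : {set 'I_N}), #|S| = n ->
  \sum_(x in S) F #|[set r in S | r < x]| = \sum_(i < n) F i.
Proof.
elim: n => [|n IH] S cS.
  by rewrite (cards0_eq cS) big_set0 big_ord0.
have [y yS] : exists y, y \in S.
  by apply/set0Pn; rewrite -card_gt0 cS.
have [M MS Mmax] := set_max yS.
rewrite (bigD1 M) //= big_ord_recr /= addnC.
have e1 : [set r in S | r < M] = S :\ M.
  apply/setP => r; rewrite !inE; apply/andP/andP => [[rS rM]|[rM rS]]; split => //.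
    by apply/eqP => e; rewrite e ltnn in rM.
  by rewrite ltn_neqAle Mmax // andbT; apply: contra rM => /eqP/val_inj ->.
have cS' : #|S :\ M| = n by move: cS; rewrite (cardsD1 M) MS add1n => -[].
rewrite e1 cS'; congr (_ + _).
rewrite -(IH (S :\ M) cS').
apply: eq_big => [x|x /andP [xS xM]]; first by rewrite !inE andbC.
congr (F _); apply: eq_card => r; rewrite !inE.
apply/andP/andP => [[rS rx]|[/andP [_ rS] rx]]; split => //.
apply/andP; split => //; apply/eqP => e; subst r.
have : (x <= M)%N by apply: Mmax.
by rewrite leqNgt rx.
Qed.


Lemma card_cons (T : finType) k (P : pred (k.+1.-tuple T)) :
  #|[set s | P s]| = \sum_(x : T) #|[set s : k.-tuple T | P [tuple of x :: s]]|.
Proof.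
have -> : #|[set s | P s]| = \sum_(s | P s) 1.
  by rewrite -sum1_card; apply: eq_bigl => s; rewrite inE.
rewrite (reindex (fun p : T * k.-tuple T => [tuple of p.1 :: p.2])) /=; last first.
  exists (fun s => (thead s, [tuple of behead s])) => [[x s]|s] _ /=.
    by congr pair; apply: val_inj.
  by rewrite -tuple_eta.
rewrite -(pair_big_dep xpredT (fun (x : T) (s : k.-tuple T) => P [tuple of x :: s]) (fun _ _ => 1)) /=.
by apply: eq_bigr => x _; rewrite -sum1_card; apply: eq_bigl => s; rewrite inE.
Qed.

Lemma card_pair (A B : finType) (P : pred (A * B)) :
  #|[set p | P p]| = \sum_(a : A) #|[set b : B | P (a, b)]|.
Proof.
have -> : #|[set s | P s]| = \sum_(s | P s) 1.
  by rewrite -sum1_card; apply: eq_bigl => s; rewrite inE.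
rewrite (eq_bigl (fun p : A * B => xpredT p.1 && P (p.1, p.2))); last by case.
rewrite -(pair_big_dep xpredT (fun a b => P (a, b)) (fun _ _ => 1)) /=.
by apply: eq_bigr => x _; rewrite -sum1_card; apply: eq_bigl => s; rewrite inE.
Qed.

Definition cnt N k (R : {set 'I_N}) m t :=
  #|[set s : k.-tuple 'I_N | uniq s && ([set:: s] == R) && run m t (map val s)]|.

Lemma cons_eq (T : finType) (x : T) (s : seq T) (R : {set T}) : x \in R ->
  ((x \notin s) && (x |: [set:: s] == R)) = ([set:: s] == R :\ x).
Proof.
move=> xR; have xs : (x \in [set:: s]) = (x \in s) by rewrite inE.
apply/andP/eqP => [[xS /eqP <-]|e]; first by rewrite setU1K // xs.
by rewrite -xs e setD11 setD1K.
Qed.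

Lemma cnt_step N k (R : {set 'I_N}) m t (x : 'I_N) :
  #|[set s : k.-tuple 'I_N | uniq [tuple of x :: s] && ([set:: [tuple of x :: s]] == R)
      && run m t (map val [tuple of x :: s])]|
  = if (x \in R) && (x < t) then cnt k (R :\ x) (minn m x) (if m < x then minn t x.+1 else t) else 0.
Proof.
case: ifP => [/andP [xR xt]|H].
  apply: eq_card => s; rewrite !inE /= xt /= set_cons -(cons_eq s xR).
  by case: (x \in s); case: (uniq s); case: (_ == R).
apply: eq_card0 => s; rewrite !inE /= set_cons.
case xR: (x \in R) in H.
  by move: H => /= ->; rewrite !andbF.
case e: (_ == R); last by rewrite andbF.
by move/eqP: e xR => <-; rewrite !inE eqxx.
Qed.

Lemma cntE N k : forall (R : {set 'I_N}) m t, #|R| = k ->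
  (forall r, r \in R -> val r != m) ->
  cnt k R m t = if [forall r in R, r < t] then hh k #|[set r in R | r < m]| else 0.
Proof.
elim: k => [|k IH] R m t cR Rm.
  rewrite (cards0_eq cR).
  have -> : [forall r in (set0 : {set 'I_N}), r < t] by apply/forall_inP => r; rewrite inE.
  rewrite /cnt /=; apply: (@eq_card1 _ [tuple]) => s.
  by rewrite tuple0 !inE /= set_nil !eqxx.
rewrite /cnt card_cons /=.
rewrite (eq_bigr _ (fun x _ => cnt_step k R m t x)).
have IHx : forall x, x \in R -> cnt k (R :\ x) (minn m x) (if m < x then minn t x.+1 else t) =
   if [forall r in R :\ x, r < (if m < x then minn t x.+1 else t)]
   then hh k #|[set r in R :\ x | r < minn m x]| else 0.
  move=> x xR; apply: IH.
    by move: cR; rewrite (cardsD1 x) xR add1n => -[].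
  move=> r /setD1P [rx rR]; case: (leqP m x) => mx; first by apply: Rm.
  by apply: contra rx => /eqP/val_inj ->.
case: (boolP [forall r in R, r < t]) => [allt|nall]; last first.
  apply: big1 => x _; case: ifP => // /andP [xR xt]; rewrite IHx //.
  case: ifP => // H; move/forall_inPn: nall => [r rR rt].
  have rx : r != x by apply: contraNneq rt => ->.
  have := forall_inP H r; rewrite !inE rx rR => /(_ isT).
  case: (m < x) => [|rt']; last by rewrite rt' in rt.
  by rewrite leq_min => /andP [rt' _]; rewrite rt' in rt.
transitivity (\sum_(x in R) (if x < m then hh k #|[set r in R | r < x]|
    else if [forall r in R, r <= x] then hh k #|[set r in R | r < m]| else 0)).
  rewrite [RHS]big_mkcond /=; apply: eq_bigr => x _; case xR: (x \in R) => //=.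
  rewrite (forall_inP allt x xR) /= IHx //.
  case xm: (x < m).
    rewrite (minn_idPr (ltnW xm)) ltnNge (ltnW xm) /=.
    rewrite (_ : [forall r in R :\ x, r < t]); last first.
      by apply/forall_inP => r /setD1P [_ rR]; apply: (forall_inP allt).
    congr (hh k _); apply: eq_card => r; rewrite !inE.
    by case: (r =P x) => [->| _] /=; [rewrite ltnn !andbF | ].
  have mx : m < x by rewrite ltn_neqAle eq_sym (Rm x xR) /= leqNgt xm.
  rewrite (minn_idPl (ltnW mx)) mx.
  rewrite (_ : [forall r in R :\ x, r < minn t x.+1] = [forall r in R, r <= x]); last first.
    apply/forall_inP/forall_inP => H r rR.
      case: (r =P x) => [->//|/eqP rx]; have := H r; rewrite !inE rx rR => /(_ isT).
      by rewrite leq_min ltnS => /andP [].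
    move/setD1P: rR => [_ rR].
    by rewrite leq_min ltnS H // (forall_inP allt).
  case: ifP => // _; congr (hh k _); apply: eq_card => r; rewrite !inE.
  by case: (r =P x) => [->| _] /=; [rewrite xm !andbF | ].
rewrite (bigID (fun x : 'I_N => x < m)) /=.
congr (_ + _).
  rewrite -(rank_sum (hh k) (erefl #|[set r in R | r < m]|)).
  apply: eq_big => [x|x /andP [xR xm]]; first by rewrite !inE.
  rewrite xm; congr (hh k _); apply: eq_card => r; rewrite !inE.
  case: (r \in R) => //=; case rx: (r < x); rewrite ?andbT ?andbF //.
  by rewrite (ltn_trans rx xm).
have [y yR] : exists y, y \in R by apply/set0Pn; rewrite -card_gt0 cR.
have [M MR Mmax] := set_max yR.
rewrite (eq_bigr (fun x : 'I_N => if [forall r in R, r <= x] then hh k #|[set r in R | r < m]| else 0));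
  last by move=> x /andP [_ /negbTE ->].
case Mm: (M < m).
  have -> : [set r in R | r < m] = R.
    apply/setP => r; rewrite inE; case rR: (r \in R) => //=.
    exact: leq_ltn_trans (Mmax r rR) Mm.
  rewrite cR ltnn big1 // => x /andP [xR].
  by rewrite (leq_ltn_trans (Mmax x xR) Mm).
rewrite (bigD1 M) /=; last by rewrite MR Mm.
rewrite (_ : [forall r in R, r <= M]); last by apply/forall_inP.
rewrite big1 ?addn0; last first.
  move=> x /andP [/andP [xR _] xM]; case: ifP => // /forall_inP H.
  have a := H M MR; have b := Mmax x xR.
  have : val x = val M by apply/eqP; rewrite eqn_leq a b.
  by move/val_inj => e; rewrite e eqxx in xM.
have cD : #|R :\ M| = k by move: cR; rewrite (cardsD1 M) MR add1n => -[].
have : [set r in R | r < m] \subset R :\ M.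
  apply/subsetP => r; rewrite !inE => /andP [rR rm]; rewrite rR andbT.
  by apply: contraTneq rm => ->; rewrite Mm.
by move/subset_leq_card; rewrite cD -ltnS => ->.
Qed.


Section Bij.
Variable m : nat.
Local Notation K := m.+1.
Local Notation N := m.+2.

Definition g (b : 'I_N) (f : K.-tuple 'I_N) : {ffun 'I_K -> {set 'I_N}} :=
  [ffun i => if i == ord0 then [set tnth f ord0; b] else [set tnth f i]].

Lemma memg b f i y : (y \in g b f i) =
  if i == ord0 then (y == tnth f ord0) || (y == b) else (y == tnth f i).
Proof. by rewrite ffunE; case: ifP; rewrite !inE. Qed.

Lemma tnth_g b f i : tnth f i \in g b f i.
Proof. by rewrite memg; case: ifP => [/eqP->|]; rewrite eqxx. Qed.

Lemma nth_val (f : K.-tuple 'I_N) (i : 'I_K) : nth 0 (map val f) i = tnth f i.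
Proof. by rewrite (nth_map ord0) ?size_tuple // -tnth_nth. Qed.

Definition o0 : 'I_3 := @Ordinal 3 0 isT.
Definition o1 : 'I_3 := @Ordinal 3 1 isT.
Definition o2 : 'I_3 := @Ordinal 3 2 isT.

Lemma contains_g (b : 'I_N) (f : K.-tuple 'I_N) : tnth f ord0 < b ->
  contains_pat p123 (g b f) = has123 (map val f).
Proof.
move=> f0b; apply/idP/idP.
  case/existsP => idx /existsP [el /andP [/andP [/forallP H1 /forallP H2] /forallP H3]].
  have Hlt : forall j j', (el j < el j') = (j < j').
    by move=> j j'; have := forallP (H3 j) j'; rewrite /p123 !perm1 => /eqP.
  have i01 : idx o0 < idx o1 by have := forallP (H1 o0) o1.
  have i12 : idx o1 < idx o2 by have := forallP (H1 o1) o2.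
  have e1 : el o1 = tnth f (idx o1).
    have := H2 o1; rewrite memg; case: ifP => [/eqP e|_ /eqP //].
    by move: i01; rewrite e /= ltn0.
  have e2 : el o2 = tnth f (idx o2).
    have := H2 o2; rewrite memg; case: ifP => [/eqP e|_ /eqP //].
    by move: i12; rewrite e /= ltn0.
  have e0 : tnth f (idx o0) <= el o0.
    have := H2 o0; rewrite memg; case: ifP => [/eqP ->|_ /eqP -> //].
    by case/orP => /eqP ->; [exact: leqnn | exact: ltnW].
  apply/has123P; exists (idx o0), (idx o1), (idx o2); split => //.
    by rewrite size_map size_tuple.
  rewrite !nth_val -e1 -e2 (Hlt o1 o2) andbT.
  by apply: leq_ltn_trans e0 _; rewrite Hlt.
case/has123P => i [j [k [ij jk]]]; rewrite size_map size_tuple => kK.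
have jK : j < K by apply: ltn_trans jk kK.
have iK : i < K by apply: ltn_trans ij jK.
rewrite -[i]/(val (Ordinal iK)) -[j]/(val (Ordinal jK)) -[k]/(val (Ordinal kK)) !nth_val.
have ij' : val (Ordinal iK) < val (Ordinal jK) := ij.
have jk' : val (Ordinal jK) < val (Ordinal kK) := jk.
move: (Ordinal iK) (Ordinal jK) (Ordinal kK) ij' jk' => I J L ij' jk' ineq.
apply/existsP; exists [ffun x : 'I_3 => nth I [:: I; J; L] x].
apply/existsP; exists [ffun x : 'I_3 => tnth f (nth I [:: I; J; L] x)].
apply/andP; split; first (apply/andP; split).
- apply/forallP => x; apply/forallP => y; apply/implyP.
  case: x => [[|[|[|x]]] hx] //; case: y => [[|[|[|y]]] hy] //=; rewrite !ffunE //= => _;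
  rewrite ?ij' ?jk' //; exact: ltn_trans ij' jk'.
- apply/forallP => x; rewrite ffunE.
  have -> : [ffun x0 : 'I_3 => nth I [:: I; J; L] x0] x = nth I [:: I; J; L] x by rewrite ffunE.
  exact: tnth_g.
- apply/forallP => x; apply/forallP => y; rewrite /p123 !perm1 !ffunE.
  move/andP: ineq => [a c].
  case: x => [[|[|[|x]]] hx] //; case: y => [[|[|[|y]]] hy] //=; rewrite ?ltnn //.
  all: have nlt : forall u v, u < v -> (v < u) = false by move=> u v h; rewrite ltnNge ltnW.
  all: by rewrite ?a ?c ?(ltn_trans a c) ?(nlt _ _ a) ?(nlt _ _ c) ?(nlt _ _ (ltn_trans a c)).
Qed.

Definition V := [set B : {ffun 'I_K -> {set 'I_N}} | ordered_partition B &&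
   [forall i : 'I_K, #|B i| == (if i == ord0 then 2 else 1)] && ~~ contains_pat p123 B].
Definition D := [set p : 'I_N * K.-tuple 'I_N |
   uniq p.2 && (p.1 \notin p.2) && (tnth p.2 ord0 < p.1) && ~~ has123 (map val p.2)].

Lemma g_inj : {in D &, injective (fun p => g p.1 p.2)}.
Proof.
move=> [b1 f1] [b2 f2] /=; rewrite !inE /= => /andP [/andP [/andP [_ _] l1] _]
  /andP [/andP [/andP [_ _] l2] _] e.
have eB : forall i, g b1 f1 i = g b2 f2 i by move=> i; rewrite e.
have ei : forall i, i != ord0 -> tnth f1 i = tnth f2 i.
  by move=> i /negbTE i0; have := eB i; rewrite !ffunE i0; exact: set1_inj.
have [ea eb] : tnth f1 ord0 = tnth f2 ord0 /\ b1 = b2.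
  have := eB ord0; rewrite !ffunE eqxx => /setP e'.
  have h1 := e' (tnth f1 ord0); have h2 := e' b1.
  rewrite !inE eqxx /= in h1; rewrite !inE eqxx orbT /= in h2.
  case/orP: (esym h1) => /eqP h1'.
    split => //; case/orP: (esym h2) => /eqP h2' //.
    by rewrite h2' -h1' ltnn in l1.
  exfalso; case/orP: (esym h2) => /eqP h2'.
    by move: l1 l2; rewrite h1' h2' => l1 l2; move: (ltn_trans l1 l2); rewrite ltnn.
  by rewrite h1' -h2' ltnn in l1.
congr pair => //; apply: eq_from_tnth => i.
by case: (i =P ord0) => [->|/eqP]; [exact: ea | exact: ei].
Qed.

Lemma V_eq : V = (fun p => g p.1 p.2) @: D.
Proof.
apply/setP => B; apply/idP/imsetP.
  rewrite inE => /andP [/andP [Hp /forallP Hs] Hc].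
  move: Hp => /andP [/andP [_ /forallP Hd] _].
  have disj : forall i j z, i != j -> z \in B i -> z \in B j -> False.
    move=> i j z ij zi zj; have := forallP (Hd i) j; rewrite ij /= -setI_eq0.
    by move/eqP/setP/(_ z); rewrite !inE zi zj.
  have := Hs ord0; rewrite eqxx => /cards2P [x0 [y0 [xy0 e00]]].
  have [x [y [lt e0]]] : exists x y : 'I_N, x < y /\ B ord0 = [set x; y].
    case: (ltngtP x0 y0) => h; first by exists x0, y0.
      by exists y0, x0; rewrite setUC.
    by move/val_inj: h => h; rewrite h eqxx in xy0.
  pose f := [tuple (if i == ord0 then x else odflt x [pick z in B i]) | i < K].
  have ef : forall i, i != ord0 -> B i = [set tnth f i].
    move=> i /negbTE i0; have := Hs i; rewrite i0 => /cards1P [z ez].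
    rewrite tnth_mktuple i0 ez; case: pickP => [z' /set1P -> //|/(_ z)].
    by rewrite inE eqxx.
  have eB : B = g y f.
    apply/ffunP => i; rewrite ffunE; case: ifP => [/eqP ->|/negbT i0].
      by rewrite e0 tnth_mktuple eqxx.
    exact: ef.
  have f0 : tnth f ord0 = x by rewrite tnth_mktuple eqxx.
  have finj : injective (tnth f).
    move=> i j e; case: (i =P j) => // /eqP ij; exfalso.
    have h1 : tnth f i \in B i by rewrite eB; exact: tnth_g.
    have h2 : tnth f i \in B j by rewrite e eB; exact: tnth_g.
    exact: (disj i j _ ij h1 h2).
  have uf : uniq f := introT (tuple_uniqP f) finj.
  have yf : y \notin f.
    apply/negP => /tnthP [j ej].
    have yB : y \in B ord0 by rewrite e0 !inE eqxx orbT.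
    case: (j =P ord0) => [jo|/eqP jo].
      by move: ej; rewrite jo f0 => ej; rewrite ej ltnn in lt.
    apply: (disj ord0 j y); rewrite 1?eq_sym //.
    by rewrite ej eB; exact: tnth_g.
  rewrite eB contains_g ?f0 // in Hc.
  exists (y, f) => //; rewrite inE /=.
  by rewrite Hc f0 lt uf yf.
case => [[b f]] pD ->; move: pD; rewrite !inE /= => /andP [/andP [/andP [uf bf] lt] nh].
have finj : injective (tnth f) := elimT (tuple_uniqP f) uf.
have bnf : forall j, b != tnth f j.
  by move=> j; apply: contraNneq bf => ->; exact: mem_tnth.
rewrite contains_g // nh andbT; apply/andP; split; last first.
  apply/forallP => i; rewrite ffunE; case: ifP => _; last by rewrite cards1.
  by rewrite cards2 -val_eqE /= (ltn_eqF lt).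
apply/andP; split; first (apply/andP; split).
- apply/forallP => i; apply/set0Pn; exists (tnth f i); exact: tnth_g.
- apply/forallP => i; apply/forallP => j; apply/implyP => ij.
  rewrite -setI_eq0; apply/eqP/setP => z; rewrite inE in_set0 !memg.
  case: (i =P ord0) => [ei|/eqP ni]; case: (j =P ord0) => [ej|/eqP nj].
  + by move: ij; rewrite ei ej eqxx.
  + rewrite /=; apply/negP => /andP [h /eqP ez]; subst z.
    case/orP: h => /eqP h; last by move: (bnf j); rewrite h eqxx.
    by move/finj: h => h; rewrite h eqxx in nj.
  + rewrite /=; apply/negP => /andP [/eqP ez h]; subst z.
    case/orP: h => /eqP h; last by move: (bnf i); rewrite h eqxx.
    by move/finj: h => h; rewrite h eqxx in ni.
  + rewrite /=; apply/negP => /andP [/eqP -> /eqP /finj h].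
    by rewrite h eqxx in ij.
- apply/eqP/setP => z; rewrite inE; apply/bigcupP.
  case zf: (z \in f).
    by move/tnthP: zf => [i ->]; exists i => //; exact: tnth_g.
  exists ord0 => //; rewrite memg eqxx.
  case: (z =P b) => [->|/eqP zb]; first by rewrite orbT.
  exfalso.
  have sub : [set:: f] \subset ~: [set z; b].
    apply/subsetP => w; rewrite !inE => wf.
    apply/negP => /orP [/eqP e|/eqP e]; subst w; [by rewrite wf in zf | by rewrite wf in bf].
  have := subset_leq_card sub.
  have c2 : #|[set z; b]| = 2 by rewrite cards2 zb.
  have := cardsC [set z; b]; rewrite c2 card_ord => hc.
  rewrite cardsE (card_uniqP uf) size_tuple.
  by move: hc; rewrite add2n => -[] ->; rewrite ltnn.
Qed.

Lemma card_V : #|V| = #|D|.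
Proof. by rewrite V_eq card_in_imset //; exact: g_inj. Qed.

End Bij.


Lemma card_lt N x : x <= N -> #|[set r : 'I_N | r < x]| = x.
Proof.
move=> xN.
have -> : [set r : 'I_N | r < x] = (widen_ord xN) @: [set: 'I_x].
  apply/setP => r; rewrite inE; apply/idP/imsetP => [rx|[i _ ->]] //=.
  by exists (Ordinal rx); rewrite ?inE //; apply: val_inj.
rewrite card_imset ?cardsT ?card_ord //.
by move=> a c e; apply: val_inj; move/(congr1 val): e.
Qed.

Lemma cardC2 m (x b : 'I_m.+2) : x != b -> #|~: [set x; b]| = m.
Proof.
move=> xb; have := cardsC [set x; b]; rewrite cards2 xb card_ord.
by rewrite add2n => -[].
Qed.

Lemma setcond m (x b : 'I_m.+2) (s : m.-tuple 'I_m.+2) : x != b ->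
  ((x \notin s) && uniq s && (b \notin x :: s)) = (uniq s && ([set:: s] == ~: [set x; b])).
Proof.
move=> xb; apply/idP/idP.
  move=> /andP [/andP [xs us] bxs]; rewrite us /= eqEcard (cardC2 xb).
  rewrite cardsE (card_uniqP us) size_tuple leqnn andbT.
  apply/subsetP => w; rewrite !inE => ws; apply/negP => /orP [/eqP e|/eqP e]; subst w.
    by rewrite ws in xs.
  by rewrite inE ws orbT in bxs.
move=> /andP [us /eqP es].
have mem : forall w, (w \in s) = (w \in ~: [set x; b]) by move=> w; rewrite -es inE.
rewrite us inE !mem !inE eqxx /= eqxx orbT /= orbF.
by rewrite eq_sym.
Qed.

Lemma termD m (b x : 'I_m.+2) :
  #|[set s : m.-tuple 'I_m.+2 | uniq [tuple of x :: s] && (b \notin [tuple of x :: s]) &&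
      (tnth [tuple of x :: s] ord0 < b) && ~~ has123 (map val [tuple of x :: s])]|
  = if x < b then hh m x else 0.
Proof.
case: (boolP (x < b)) => xb; last first.
  by apply: eq_card0 => s; rewrite !inE andbF.
have xb' : x != b by apply: contraTneq xb => ->; rewrite ltnn.
have cR := cardC2 xb'.
have Rx : forall r, r \in ~: [set x; b] -> val r != x.
  by move=> r; rewrite !inE negb_or => /andP [rx _].
have := @cntE m.+2 m (~: [set x; b]) x m.+2 cR Rx.
have fa : [forall r in ~: [set x; b], r < m.+2] by apply/forall_inP => r _; exact: ltn_ord.
have es : [set r in ~: [set x; b] | r < x] = [set r : 'I_m.+2 | r < x].
  apply/setP => r; rewrite !inE; case rx: (r < x); rewrite ?andbF ?andbT //.
  rewrite negb_or; apply/andP; split; apply/negP => /eqP e; subst r.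
    by rewrite ltnn in rx.
  by move: (ltn_trans rx xb); rewrite ltnn.
rewrite fa es card_lt ?(ltnW (ltn_ord x)) // => <-.
apply: eq_card => s; rewrite !inE /= andbT.
have hs := setcond s xb'; rewrite inE in hs; rewrite hs.
have aN : all (fun z => z < m.+2) (val x :: map val s).
  apply/allP => z /=; rewrite inE => /orP [/eqP ->|/mapP [w _ ->]]; exact: ltn_ord.
have := run_N aN; rewrite /= ltn_ord /= (minn_idPr (ltnW (ltn_ord x))).
by rewrite ltnNge (ltnW (ltn_ord x)) /= => ->.
Qed.

Lemma countD m : #|D m| + hh m.+1 m.+1 = hh m.+2 m.+1.
Proof.
rewrite /D card_pair.
rewrite (eq_bigr (fun b : 'I_m.+2 => \sum_(x < b) hh m x)); last first.
  move=> b _; rewrite card_cons.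
  rewrite (eq_bigr (fun x : 'I_m.+2 => if x < b then hh m x else 0)); last first.
    by move=> x _; exact: termD.
  by rewrite (big_ord_widen _ (hh m) (ltnW (ltn_ord b))) [RHS]big_mkcond.
rewrite big_ord_recl.
have -> : \sum_(x < (@ord0 m.+1)) hh m x = 0 by rewrite /= big_ord0.
rewrite add0n [RHS]/= ltnSn; congr (_ + _).
apply: eq_bigr => i _ /=.
by rewrite big_ord_recr /= ltn_ord.
Qed.

Lemma op_gen (b : seq nat) m : size b = m.+1 -> sumn b = m.+2 ->
  (forall i : nat, i < m.+1 -> nth 0 b i = if i == 0 then 2 else 1) ->
  op b p123 = #|V m|.
Proof.
move=> hs hn hc; rewrite /op; move: (nth 0 b) hc => c hc.
move: (size b) (sumn b) hs hn => K N -> -> .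
apply: eq_card => B; rewrite !inE; congr (_ && _ && _).
by apply: eq_forallb => i; rewrite hc ?ltn_ord.
Qed.

Import GRing.Theory Num.Theory.
Local Open Scope ring_scope.

Lemma fact_neq0 k : (k`!)%:R != 0 :> rat.
Proof. by rewrite pnatr_eq0 -lt0n fact_gt0. Qed.

Lemma hh_closed p q : (hh (p + q) p)%:R =
  ((q.+1 * (p.*2 + q)`!)%:R / (p`! * (p + q).+1`!)%:R : rat).
Proof.
elim: p q => [|p IHp] q.
  by rewrite add0n hh0 fact0 mul1n -factS divff ?fact_neq0.
elim: q => [|q IHq].
  rewrite addn0 hhS // ltnn addn0 -[X in hh X p]addn1 IHp.
  rewrite (_ : (p.+1.*2 + 0 = (p.*2 + 1).+1)%N); last by rewrite doubleS; lia.
  rewrite (_ : ((p + 1).+1 = p.+2)%N); last by lia.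
  move: (factS (p.*2+1)%N) (factS p) (fact_gt0 p) (fact_gt0 (p.*2+1)%N) (fact_gt0 p.+2).
  move: ((p.*2 + 1).+1)`! (p.*2+1)`! (p.+1)`! p`! (p.+2)`! => Y X P1 P Q -> -> hP hX hQ.
  rewrite -!muln2 !natrM.
  have nz : forall k, (0 < k)%N -> k%:R != 0 :> rat by move=> k; rewrite pnatr_eq0 -lt0n.
  by field; rewrite nat1r !nz.
rewrite (_ : (p.+1 + q.+1 = (p + q.+1).+1)%N); last by lia.
rewrite hhS; last by lia.
rewrite (_ : (p < p + q.+1)%N = true); last by lia.
rewrite natrD -addnS IHp (addnS p q) -(addSn p q) IHq.
rewrite (_ : (p.*2 + q.+2 = (p.*2+q).+2)%N); last by lia.
rewrite (_ : (p.+1.*2 + q = (p.*2+q).+2)%N); last by rewrite doubleS; lia.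
rewrite (_ : (p.+1.*2 + q.+1 = (p.*2+q).+3)%N); last by rewrite doubleS; lia.
rewrite (_ : ((p + q.+2).+1 = (p+q).+3)%N); last by lia.
rewrite (_ : ((p.+1 + q).+1 = (p+q).+2)%N); last by lia.
move: (factS (p.*2+q).+2) (factS p) (factS (p+q).+2) (fact_gt0 p) (fact_gt0 (p.*2+q).+2) (fact_gt0 (p+q).+2).
move: ((p.*2 + q).+3)`! ((p.*2+q).+2)`! (p.+1)`! p`! ((p+q).+3)`! ((p+q).+2)`! => F3 F2 P1 P G3 G2 -> -> -> hP hF hG.
rewrite -!muln2 !natrM.
have nz : forall k, (0 < k)%N -> k%:R != 0 :> rat by move=> k; rewrite pnatr_eq0 -lt0n.
by field; rewrite -?natrD ?nat1r !nz.
Qed.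

Lemma final_num T m : (T + hh m.+1 m.+1 = hh m.+2 m.+1)%N ->
  (T%:R : rat) = (3 * (m.+2 - 1) * 'C(2 * m.+2 - 2, m.+2 - 1))%:R / (m.+2 * (m.+2 + 1))%:R.
Proof.
move=> /(congr1 (fun k => k%:R : rat)); rewrite natrD => e.
have -> : (T%:R : rat) = (hh m.+2 m.+1)%:R - (hh m.+1 m.+1)%:R by rewrite -e addrK.
have h1 := hh_closed m.+1 1; have h2 := hh_closed m.+1 0.
rewrite addn0 in h2; rewrite addn1 in h1; rewrite h1 h2.
rewrite (_ : (m.+2 - 1 = m.+1)%N); last by lia.
rewrite (_ : (2 * m.+2 - 2 = m.+1 + m.+1)%N); last by lia.
have hb := bin_fact (leq_addr m.+1 m.+1).
rewrite addnK in hb.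
rewrite (_ : (m.+1.*2 + 1 = (m.+1 + m.+1).+1)%N); last by lia.
rewrite (_ : (m.+1.*2 + 0 = (m.+1 + m.+1))%N); last by lia.

rewrite (_ : (m.+2 + 1 = m.+3)%N); last by lia.
move: hb (factS (m.+1 + m.+1)) (factS m.+2) (factS m.+1) (fact_gt0 m.+1) (fact_gt0 (m.+1 + m.+1)).
move: ('C(m.+1 + m.+1, m.+1)) ((m.+1 + m.+1).+1)`! (m.+1 + m.+1)`! (m.+3)`! (m.+2)`! (m.+1)`!
  => C F1 F G3 G2 G1 hC -> -> -> hG hF.
have nz : forall k, (0 < k)%N -> k%:R != 0 :> rat by move=> k; rewrite pnatr_eq0 -lt0n.
have hC' : (C%:R : rat) = F%:R / (G1%:R * G1%:R).
  by rewrite -hC !natrM mulfK // mulf_neq0 ?nz.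
rewrite !natrM hC'.
by field; rewrite -?natrD ?nat1r !nz.
Qed.


Theorem lemma2 (n : nat) (hn : (2 <= n)%N) :
  ((op (2 :: nseq (n - 2) 1)%N p123)%:R : rat) =
  (3 * (n - 1) * 'C(2 * n - 2, n - 1))%:R / (n * (n + 1))%:R.
Proof.
case: n hn => [|[|m]] // _.
rewrite (_ : (m.+2 - 2 = m)%N); last by lia.
rewrite (op_gen (m:=m)); last first.
- by move=> [|i] hi //=; rewrite nth_nseq -ltnS hi.
- by rewrite /= sumn_nseq mul1n.
- by rewrite /= size_nseq.
rewrite card_V; apply: final_num; exact: countD.
Qed.
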